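(* Let $A$ (in $\mathcal H$) and $B$ (in $\mathcal K$) be closed densely defined operators with $A\dashv B$ via a bounded intertwining operator $T$. Assume that $D(B)\subseteq D(T^{-1})$ and $R(B)\subseteq D(T^{-1})$, where $D(T^{-1})=R(T)$. Then $\rho(A)\setminus\sigma_p(B)\subseteq\rho(B)\cup\sigma_c(B)$.
   Context: A bounded operator $T:\mathcal H\to\mathcal K$ is a bounded intertwining operator for $A$ and $B$ if $T D(A)\subseteq D(B)$ and $BT\xi=TA\xi$ for all $\xi\in D(A)$. $A\dashv B$ (quasi-similarity) means there is a bounded intertwining operator $T$ for $A$ and $B$ that is injective with densely defined inverse $T^{-1}$. Spectral notions: $\rho(A)$ = set of $\lambda$ with $A-\lambda I$ injective and $(A-\lambda I)^{-1}$ bounded everywhere defined; $\sigma_p$ = set of eigenvalues; $\sigma_c(B)$ = set of $\lambda$ with $B-\lambda I$ injective with dense range different from $\mathcal K$. *)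

(* Defs.v *)
From Stdlib Require Import Reals.
Open Scope R_scope.

Definition Cplx : Type := (R * R)%type.
Definition C0 : Cplx := (0, 0).
Definition C1 : Cplx := (1, 0).
Definition Cadd (z w : Cplx) : Cplx := (fst z + fst w, snd z + snd w).
Definition Cmul (z w : Cplx) : Cplx :=
  (fst z * fst w - snd z * snd w, fst z * snd w + snd z * fst w).
Definition Cconj (z : Cplx) : Cplx := (fst z, - snd z).

Record CHilbert := {
  hcar :> Type;
  hzero : hcar;
  hadd : hcar -> hcar -> hcar;
  hopp : hcar -> hcar;
  hscal : Cplx -> hcar -> hcar;
  hinner : hcar -> hcar -> Cplx;
  hadd_assoc : forall x y z, hadd x (hadd y z) = hadd (hadd x y) z;
  hadd_comm : forall x y, hadd x y = hadd y x;
  hadd_zero : forall x, hadd x hzero = x;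
  hadd_opp : forall x, hadd x (hopp x) = hzero;
  hscal_one : forall x, hscal C1 x = x;
  hscal_mul : forall a b x, hscal (Cmul a b) x = hscal a (hscal b x);
  hscal_addv : forall a x y, hscal a (hadd x y) = hadd (hscal a x) (hscal a y);
  hscal_adds : forall a b x, hscal (Cadd a b) x = hadd (hscal a x) (hscal b x);
  hinner_add : forall x y z, hinner (hadd x y) z = Cadd (hinner x z) (hinner y z);
  hinner_scal : forall a x y, hinner (hscal a x) y = Cmul a (hinner x y);
  hinner_conj : forall x y, hinner x y = Cconj (hinner y x);
  hinner_pos : forall x, 0 <= fst (hinner x x);
  hinner_def : forall x, hinner x x = C0 -> x = hzero;
  hcomplete : forall u : nat -> hcar,
    (forall eps, 0 < eps -> exists N, forall m n, (N <= m)%nat -> (N <= n)%nat ->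
       sqrt (fst (hinner (hadd (u m) (hopp (u n))) (hadd (u m) (hopp (u n))))) < eps) ->
    exists l, forall eps, 0 < eps -> exists N, forall n, (N <= n)%nat ->
       sqrt (fst (hinner (hadd (u n) (hopp l)) (hadd (u n) (hopp l)))) < eps
}.

Arguments hzero {_}. Arguments hadd {_}. Arguments hopp {_}.
Arguments hscal {_}. Arguments hinner {_}.

Definition hnorm {H : CHilbert} (x : H) : R := sqrt (fst (hinner x x)).
Definition hsub {H : CHilbert} (x y : H) : H := hadd x (hopp y).

Definition converges {H : CHilbert} (u : nat -> H) (l : H) : Prop :=
  forall eps, 0 < eps -> exists N, forall n, (N <= n)%nat -> hnorm (hsub (u n) l) < eps.

Definition dense {H : CHilbert} (S : H -> Prop) : Prop :=
  forall x eps, 0 < eps -> exists y, S y /\ hnorm (hsub x y) < eps.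

Section Ops.
Variable H K : CHilbert.

(** A (possibly unbounded) linear operator is a pair (D, A): a linear
    subspace D (its domain) and a map A, linear on D; values of A outside
    D are irrelevant. *)
Definition linear_op (D : H -> Prop) (A : H -> K) : Prop :=
  D hzero /\
  (forall x y, D x -> D y -> D (hadd x y) /\ A (hadd x y) = hadd (A x) (A y)) /\
  (forall a x, D x -> D (hscal a x) /\ A (hscal a x) = hscal a (A x)).

Definition closed_op (D : H -> Prop) (A : H -> K) : Prop :=
  forall (u : nat -> H) x y, (forall n, D (u n)) ->
    converges u x -> converges (fun n => A (u n)) y -> D x /\ A x = y.

Definition closed_densely_defined (D : H -> Prop) (A : H -> K) : Prop :=
  linear_op D A /\ closed_op D A /\ dense D.

Definition bounded_op (T : H -> K) : Prop :=
  linear_op (fun _ => True) T /\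
  exists M, forall x, hnorm (T x) <= M * hnorm x.

Definition intertwining (T : H -> K) (DA : H -> Prop) (A : H -> H)
  (DB : K -> Prop) (B : K -> K) : Prop :=
  bounded_op T /\ forall xi, DA xi -> DB (T xi) /\ B (T xi) = T (A xi).

Definition range (T : H -> K) : K -> Prop := fun y => exists x, T x = y.

(** A -| B via T: T is a bounded intertwining operator which is injective
    with densely defined inverse (D(T^-1) = R(T) dense). *)
Definition quasi_similar_via (T : H -> K) DA A DB B : Prop :=
  intertwining T DA A DB B /\ (forall x y, T x = T y -> x = y) /\ dense (range T).

End Ops.

Arguments range {_ _}.

Definition shift {H : CHilbert} (A : H -> H) (lam : Cplx) : H -> H :=
  fun x => hsub (A x) (hscal lam x).

Definition in_resolvent {H : CHilbert} (D : H -> Prop) (A : H -> H) (lam : Cplx) : Prop :=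
  (forall x y, D x -> D y -> shift A lam x = shift A lam y -> x = y) /\
  (forall y, exists x, D x /\ shift A lam x = y) /\
  (exists M, forall x, D x -> hnorm x <= M * hnorm (shift A lam x)).

Definition in_point_spectrum {H : CHilbert} (D : H -> Prop) (A : H -> H) (lam : Cplx) : Prop :=
  exists x, D x /\ x <> hzero /\ A x = hscal lam x.

Definition in_continuous_spectrum {H : CHilbert} (D : H -> Prop) (A : H -> H) (lam : Cplx) : Prop :=
  (forall x y, D x -> D y -> shift A lam x = shift A lam y -> x = y) /\
  dense (fun y => exists x, D x /\ shift A lam x = y) /\
  ~ (forall y, exists x, D x /\ shift A lam x = y).

(* Main.v *)
Require Import Defs.
From Stdlib Require Import Reals Lra Lia Classical ClassicalEpsilon.
Open Scope R_scope.

Section Alg.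
Variable V : CHilbert.
Implicit Types x y z a b c d : V.
Implicit Types s r : Cplx.

Lemma add0l x : hadd hzero x = x.
Proof. rewrite hadd_comm; apply hadd_zero. Qed.
Lemma addNl x : hadd (hopp x) x = hzero.
Proof. rewrite hadd_comm; apply hadd_opp. Qed.
Lemma add_cancel_l a x y : hadd a x = hadd a y -> x = y.
Proof.
  intro E. transitivity (hadd (hopp a) (hadd a x)).
  - rewrite hadd_assoc, addNl, add0l; auto.
  - rewrite E, hadd_assoc, addNl, add0l; auto.
Qed.
Lemma opp_unique a b : hadd a b = hzero -> b = hopp a.
Proof. intro E; apply (add_cancel_l a); rewrite E, hadd_opp; auto. Qed.
Lemma oppK x : hopp (hopp x) = x.
Proof. symmetry; apply opp_unique; apply addNl. Qed.
Lemma addAC4 a b c d : hadd (hadd a b) (hadd c d) = hadd (hadd a c) (hadd b d).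
Proof.
  rewrite <- hadd_assoc, (hadd_assoc _ b c d), (hadd_comm _ b c), <- hadd_assoc, hadd_assoc; auto.
Qed.
Lemma opp_add x y : hopp (hadd x y) = hadd (hopp x) (hopp y).
Proof. symmetry; apply opp_unique. rewrite addAC4, !hadd_opp, hadd_zero; auto. Qed.
Lemma opp0 : hopp (@hzero V) = hzero.
Proof. symmetry; apply opp_unique; apply hadd_zero. Qed.
Lemma sub_eq0 x y : hsub x y = hzero -> x = y.
Proof. unfold hsub; intro E. apply opp_unique in E. rewrite <- (oppK y), E, oppK; auto. Qed.
Lemma sub_add_distr a b c d : hsub (hadd a b) (hadd c d) = hadd (hsub a c) (hsub b d).
Proof. unfold hsub; rewrite opp_add, addAC4; auto. Qed.
Lemma sub_opp x y : hopp (hsub x y) = hsub y x.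
Proof. unfold hsub; rewrite opp_add, oppK, hadd_comm; auto. Qed.
Lemma sub_chain x y z : hsub x z = hadd (hsub x y) (hsub y z).
Proof.
  unfold hsub. rewrite <- hadd_assoc, (hadd_assoc _ (hopp y) y), addNl, add0l; auto.
Qed.
Lemma add_sub_l c z : hsub (hadd c z) c = z.
Proof. unfold hsub; rewrite hadd_comm, hadd_assoc, addNl, add0l; auto. Qed.
Lemma sub0r x : hsub x hzero = x.
Proof. unfold hsub; rewrite opp0, hadd_zero; auto. Qed.
Lemma sub_add_cancel a b : hadd (hsub a b) b = a.
Proof. unfold hsub; rewrite <- hadd_assoc, addNl, hadd_zero; auto. Qed.
Lemma sub_sub_r a b c : hsub a (hsub b c) = hadd (hsub a b) c.
Proof. unfold hsub at 1. rewrite sub_opp. unfold hsub. rewrite <- !hadd_assoc, (hadd_comm _ c); auto. Qed.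

Lemma scal_C0 x : hscal C0 x = hzero.
Proof.
  assert (E : hscal (Cadd C0 C0) x = hadd (hscal C0 x) (hscal C0 x)) by apply hscal_adds.
  replace (Cadd C0 C0) with C0 in E by (unfold Cadd, C0; simpl; f_equal; ring).
  rewrite <- (hadd_zero _ (hscal C0 x)) in E at 1.
  apply add_cancel_l in E; auto.
Qed.
Lemma scal_v0 s : hscal s (@hzero V) = hzero.
Proof.
  assert (E : hscal s (hadd (@hzero V) hzero) = hadd (hscal s hzero) (hscal s hzero)) by apply hscal_addv.
  rewrite hadd_zero in E. rewrite <- (hadd_zero _ (hscal s hzero)) in E at 1.
  apply add_cancel_l in E; auto.
Qed.
Lemma scal_m1 x : hscal (-1, 0) x = hopp x.
Proof.
  apply opp_unique. rewrite <- (hscal_one _ x) at 1. rewrite <- hscal_adds.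
  replace (Cadd Defs.C1 (-1,0)) with C0 by (unfold Cadd, Defs.C1, C0; simpl; f_equal; ring).
  apply scal_C0.
Qed.
Lemma scal_opp s x : hscal s (hopp x) = hopp (hscal s x).
Proof. apply opp_unique. rewrite <- hscal_addv, hadd_opp, scal_v0; auto. Qed.
Lemma scal_sub s x y : hscal s (hsub x y) = hsub (hscal s x) (hscal s y).
Proof. unfold hsub; rewrite hscal_addv, scal_opp; auto. Qed.
Lemma scal_comm s r x : hscal s (hscal r x) = hscal r (hscal s x).
Proof.
  rewrite <- !hscal_mul. f_equal. destruct s, r; unfold Cmul; simpl; f_equal; ring.
Qed.
Lemma scal_inv t x : t <> 0 -> hscal (/t, 0) (hscal (t,0) x) = x.
Proof.
  intro Ht. rewrite <- hscal_mul.
  replace (Cmul (/t,0) (t,0)) with Defs.C1. apply hscal_one.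
  unfold Cmul, Defs.C1; simpl; f_equal; field; auto.
Qed.

Definition N2 x := fst (hinner x x).

Lemma inner0l y : hinner hzero y = C0.
Proof.
  assert (E : hinner (hadd (@hzero V) hzero) y = Cadd (hinner hzero y) (hinner hzero y)) by apply hinner_add.
  rewrite hadd_zero in E. destruct (hinner hzero y) as [p q]. unfold Cadd in E; simpl in E.
  injection E; intros; unfold C0; f_equal; lra.
Qed.
Lemma snd_inner x : snd (hinner x x) = 0.
Proof.
  pose proof (hinner_conj _ x x) as E. destruct (hinner x x) as [p q]. unfold Cconj in E; simpl in *.
  injection E; intros; lra.
Qed.
Lemma inner_add_r x y z : hinner x (hadd y z) = Cadd (hinner x y) (hinner x z).
Proof.
  rewrite (hinner_conj _ x (hadd y z)), hinner_add, (hinner_conj _ x y), (hinner_conj _ x z).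
  destruct (hinner y x), (hinner z x); unfold Cconj, Cadd; simpl; f_equal; ring.
Qed.
Lemma inner_scal_r s x y : hinner x (hscal s y) = Cmul (Cconj s) (hinner x y).
Proof.
  rewrite (hinner_conj _ x (hscal s y)), hinner_scal, (hinner_conj _ x y).
  destruct (hinner y x), s; unfold Cconj, Cmul; simpl; f_equal; ring.
Qed.
Lemma fst_inner_sym x y : fst (hinner x y) = fst (hinner y x).
Proof. rewrite (hinner_conj _ x y). destruct (hinner y x); reflexivity. Qed.
Lemma N2_ge0 x : 0 <= N2 x.
Proof. apply hinner_pos. Qed.
Lemma N2_add x y : N2 (hadd x y) = N2 x + N2 y + 2 * fst (hinner x y).
Proof.
  unfold N2. rewrite hinner_add, !inner_add_r. simpl. rewrite (fst_inner_sym y x). ring.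
Qed.
Lemma N2_scal s x : N2 (hscal s x) = (fst s * fst s + snd s * snd s) * N2 x.
Proof.
  unfold N2. rewrite hinner_scal, inner_scal_r. pose proof (snd_inner x) as Q.
  destruct (hinner x x) as [p q], s as [s1 s2]; simpl in *; subst. ring.
Qed.
Lemma fst_inner_scal_r t x y : fst (hinner x (hscal (t,0) y)) = t * fst (hinner x y).
Proof. rewrite inner_scal_r. destruct (hinner x y); simpl; ring. Qed.

Lemma quad_disc p q w : 0 <= w -> (forall t, 0 <= p + 2 * q * t + w * t * t) -> q * q <= p * w.
Proof.
  intros Hw Hq.
  destruct (Req_dec w 0) as [E|E].
  - subst. destruct (Req_dec q 0) as [E|E]. subst; lra.
    specialize (Hq (-(Rabs p + 1) / (2*q))).
    assert (2 * q * (-(Rabs p + 1) / (2*q)) = -(Rabs p + 1)) by (field; auto).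
    pose proof (Rle_abs p). nra.
  - specialize (Hq (- q / w)).
    assert (p + 2 * q * (- q / w) + w * (- q / w) * (- q / w) = (p * w - q * q) / w) by (field; auto).
    rewrite H in Hq. assert (0 < w) by lra.
    apply Rmult_le_compat_r with (r := w) in Hq; [|lra].
    unfold Rdiv in Hq; rewrite Rmult_assoc, Rinv_l in Hq by lra. lra.
Qed.

Lemma cauchy_schwarz x y : fst (hinner x y) * fst (hinner x y) <= N2 x * N2 y.
Proof.
  apply quad_disc; [apply N2_ge0|]. intro t. pose proof (N2_ge0 (hadd x (hscal (t,0) y))) as P.
  rewrite N2_add, N2_scal, fst_inner_scal_r in P. simpl in P. nra.
Qed.

Lemma hnorm_ge0 x : 0 <= hnorm x.
Proof. apply sqrt_pos. Qed.
Lemma hnorm_sq x : hnorm x * hnorm x = N2 x.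
Proof. apply sqrt_sqrt, N2_ge0. Qed.
Lemma hnorm_tri x y : hnorm (hadd x y) <= hnorm x + hnorm y.
Proof.
  pose proof (hnorm_ge0 x); pose proof (hnorm_ge0 y).
  assert (fst (hinner x y) <= hnorm x * hnorm y).
  { pose proof (cauchy_schwarz x y). rewrite <- !hnorm_sq in H1.
    assert (0 <= hnorm x * hnorm y) by (apply Rmult_le_pos; auto).
    replace (hnorm x * hnorm x * (hnorm y * hnorm y)) with ((hnorm x * hnorm y) * (hnorm x * hnorm y)) in H1 by ring.
    destruct (Rle_or_lt (fst (hinner x y)) (hnorm x * hnorm y)); auto. nra. }
  unfold hnorm at 1. rewrite <- (sqrt_square (hnorm x + hnorm y)) by lra.
  apply sqrt_le_1_alt. fold (N2 (hadd x y)). rewrite N2_add, <- !hnorm_sq. nra.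
Qed.
Lemma hnorm_scal s x : hnorm (hscal s x) = sqrt (fst s * fst s + snd s * snd s) * hnorm x.
Proof. unfold hnorm. fold (N2 (hscal s x)). rewrite N2_scal. apply sqrt_mult_alt. nra. Qed.
Lemma hnorm_scalR t x : hnorm (hscal (t,0) x) = Rabs t * hnorm x.
Proof.
  rewrite hnorm_scal. simpl. replace (t*t+0*0) with (Rsqr t) by (unfold Rsqr; ring).
  rewrite sqrt_Rsqr_abs; auto.
Qed.
Lemma hnorm_opp x : hnorm (hopp x) = hnorm x.
Proof. rewrite <- scal_m1, hnorm_scalR. replace (Rabs (-1)) with 1 by (rewrite Rabs_left; lra). ring. Qed.
Lemma hnorm_sub_sym x y : hnorm (hsub x y) = hnorm (hsub y x).
Proof. rewrite <- sub_opp, hnorm_opp; auto. Qed.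
Lemma hnorm0 : hnorm (@hzero V) = 0.
Proof. unfold hnorm. rewrite inner0l. simpl. apply sqrt_0. Qed.
Lemma hnorm_eq0 x : hnorm x = 0 -> x = hzero.
Proof.
  intro E. apply hinner_def. apply sqrt_eq_0 in E; [|apply N2_ge0].
  pose proof (snd_inner x). unfold N2 in *. destruct (hinner x x); simpl in *; subst; auto.
Qed.
Lemma hnorm_subtri x y z : hnorm (hsub x z) <= hnorm (hsub x y) + hnorm (hsub y z).
Proof. rewrite (sub_chain x y z). apply hnorm_tri. Qed.
Lemma hnorm_sub_le x y : hnorm (hsub x y) <= hnorm x + hnorm y.
Proof. unfold hsub. rewrite <- (hnorm_opp y). apply hnorm_tri. Qed.
Lemma hnorm_le_sub x y : hnorm x <= hnorm (hsub x y) + hnorm y.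
Proof. rewrite <- (sub_add_cancel x y) at 1. apply hnorm_tri. Qed.

End Alg.

Lemma le_eps a b : (forall d, 0 < d -> a < b + d) -> a <= b.
Proof.
  intro Hd. destruct (Rle_or_lt a b); auto.
  specialize (Hd ((a - b)/2)). lra.
Qed.

Lemma half_pow_small eps : 0 < eps -> exists N, (/2)^N < eps.
Proof.
  intro He. destruct (pow_lt_1_zero (/2)) with (y := eps) as [N HN]; auto.
  rewrite Rabs_pos_eq; lra.
  exists N. specialize (HN N (le_n N)). rewrite Rabs_pos_eq in HN; auto.
  apply pow_le; lra.
Qed.

Definition iter_seq {V : CHilbert} (f : nat -> V -> R -> V * R) : nat -> V * R :=
  fix g k := match k with
  | O => (hzero, 1)
  | S k => let p := g k in let q := f k (fst p) (snd p) in
     (fst q, Rmin (snd q) (snd p - hnorm (hsub (fst q) (fst p))) / 2)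
  end.

Section Baire.
Variable V : CHilbert.

Lemma baire (E : nat -> V -> Prop) : (forall y, exists n, E n y) ->
  exists n c r, 0 < r /\ forall z, hnorm (hsub z c) < r -> forall eps, 0 < eps ->
    exists e, E n e /\ hnorm (hsub z e) < eps.
Proof.
  intro Hcov. apply NNPP; intro NB.
  assert (Hstep : forall n (c : V) r, exists p : V * R, 0 < r ->
     hnorm (hsub (fst p) c) < r /\ 0 < snd p /\ forall e, E n e -> snd p <= hnorm (hsub (fst p) e)).
  { intros n c r. destruct (Rlt_dec 0 r) as [Hr|Hr].
    - apply NNPP; intro Hno; apply NB; exists n, c, r; split; auto.
      intros z Hz eps Heps; apply NNPP; intro Hne; apply Hno; exists (z, eps); intros _.
      simpl; split; auto; split; auto. intros e He; apply Rnot_lt_le; intro Hlt; apply Hne; exists e; auto.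
    - exists (c, 1). intro; lra. }
  set (stp := fun n c r => proj1_sig (constructive_indefinite_description _ (Hstep n c r))).
  assert (Hspec : forall n c r, 0 < r -> hnorm (hsub (fst (stp n c r)) c) < r /\ 0 < snd (stp n c r) /\
      forall e, E n e -> snd (stp n c r) <= hnorm (hsub (fst (stp n c r)) e)).
  { intros n c r Hr. unfold stp. destruct (constructive_indefinite_description _ _) as [p Hp]. simpl; auto. }
  set (cr := iter_seq stp).
  set (c := fun k => fst (cr k)). set (r := fun k => snd (cr k)).
  assert (EcS : forall k, c (S k) = fst (stp k (c k) (r k))) by reflexivity.
  assert (ErS : forall k, r (S k) = Rmin (snd (stp k (c k) (r k))) (r k - hnorm (hsub (c (S k)) (c k))) / 2)
    by reflexivity.
  assert (F0 : forall k, 0 < r k).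
  { induction k. unfold r; simpl; lra.
    rewrite ErS. destruct (Hspec k (c k) (r k) IHk) as [A [B C]]. rewrite <- EcS in A.
    apply Rmin_case; lra. }
  assert (F1 : forall k, hnorm (hsub (c (S k)) (c k)) + r (S k) <= r k).
  { intro k. rewrite ErS. destruct (Hspec k (c k) (r k) (F0 k)) as [A [B C]]. rewrite <- EcS in A.
    pose proof (Rmin_r (snd (stp k (c k) (r k))) (r k - hnorm (hsub (c (S k)) (c k)))). lra. }
  assert (F2 : forall k, r (S k) <= snd (stp k (c k) (r k)) / 2).
  { intro k. rewrite ErS. pose proof (Rmin_l (snd (stp k (c k) (r k))) (r k - hnorm (hsub (c (S k)) (c k)))). lra. }
  assert (F3 : forall k, r k <= (/2)^k).
  { induction k. unfold r; simpl; lra. simpl.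
    pose proof (F1 k); pose proof (hnorm_ge0 _ (hsub (c (S k)) (c k))).
    rewrite ErS. pose proof (Rmin_r (snd (stp k (c k) (r k))) (r k - hnorm (hsub (c (S k)) (c k)))). nra. }
  assert (Chain : forall j k, hnorm (hsub (c (j + k)%nat) (c k)) + r (j + k)%nat <= r k).
  { induction j; intro k. simpl. unfold hsub; rewrite hadd_opp, hnorm0; lra.
    specialize (IHj k). pose proof (F1 (j + k)%nat).
    pose proof (hnorm_subtri _ (c (S j + k)%nat) (c (j+k)%nat) (c k)). simpl plus in *. lra. }
  assert (Cau : forall eps, 0 < eps -> exists N, forall m n, (N <= m)%nat -> (N <= n)%nat ->
      hnorm (hsub (c m) (c n)) < eps).
  { intros eps He. destruct (half_pow_small (eps/2)) as [N HN]; [lra|]. exists N. intros m n Hm Hn.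
    pose proof (Chain (m - N)%nat N) as C1. pose proof (Chain (n - N)%nat N) as C2.
    replace (m - N + N)%nat with m in C1 by lia. replace (n - N + N)%nat with n in C2 by lia.
    pose proof (F0 m); pose proof (F0 n); pose proof (F3 N).
    pose proof (hnorm_subtri _ (c m) (c N) (c n)). rewrite (hnorm_sub_sym _ (c N) (c n)) in H2. lra. }
  destruct (hcomplete V c Cau) as [l Hl].
  assert (Lim : forall k, hnorm (hsub l (c k)) <= r k).
  { intro k. apply le_eps. intros d Hd. destruct (Hl d Hd) as [N HN].
    specialize (HN (N + k)%nat ltac:(lia)). pose proof (Chain N k). pose proof (F0 (N+k)%nat).
    pose proof (hnorm_subtri _ l (c (N + k)%nat) (c k)).
    change (hnorm (hsub (c (N+k)%nat) l) < d) in HN.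
    rewrite hnorm_sub_sym in HN. lra. }
  destruct (Hcov l) as [n Hn].
  destruct (Hspec n (c n) (r n) (F0 n)) as [A [B C]]. specialize (C l Hn). rewrite <- EcS in C.
  pose proof (Lim (S n)). pose proof (F2 n). rewrite hnorm_sub_sym in C. lra.
Qed.
End Baire.

Definition rem_seq {V : CHilbert} (g : nat -> V -> V * V) (y : V) : nat -> V :=
  fix f k := match k with O => y | S k => hsub (f k) (fst (g k (f k))) end.
Definition psum {V : CHilbert} (u : nat -> V) : nat -> V :=
  fix f m := match m with O => hzero | S m => hadd (f m) (u m) end.

Lemma half_pow_mono j N : (/2)^(j+N) <= (/2)^N.
Proof.
  induction j. simpl; lra. simpl. pose proof (pow_le (/2) (j+N) ltac:(lra)). lra.
Qed.

Section CG.
Variable V : CHilbert.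
Variable P : V -> V -> Prop.
Hypothesis H1 : forall y, exists x, P y x.
Hypothesis H2 : forall y1 x1 y2 x2, P y1 x1 -> P y2 x2 -> P (hadd y1 y2) (hadd x1 x2).
Hypothesis H3 : forall t y x, P y x -> P (hscal (t,0) y) (hscal (t,0) x).
Hypothesis H4 : forall x, P hzero x -> x = hzero.
Hypothesis H5 : forall (u v : nat -> V) y x, (forall n, P (u n) (v n)) ->
  converges u y -> converges v x -> P y x.

Lemma id1 (z c e1 e2 : V) : hsub z (hsub e1 e2) = hsub (hsub (hadd c z) e1) (hsub c e2).
Proof. rewrite sub_sub_r. unfold hsub. rewrite !opp_add, !oppK.
 rewrite (hadd_comm _ (hopp c) e2), addAC4, (hadd_comm _ (hopp e1) (hopp c)), addAC4.
 change (hadd (hadd c z) (hopp c)) with (hsub (hadd c z) c). rewrite add_sub_l.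
 rewrite <- hadd_assoc, (hadd_comm _ (hopp e1) e2). reflexivity.
Qed.
Lemma id2 (a b c : V) : hsub (hadd a b) c = hadd (hsub a c) b.
Proof. unfold hsub. rewrite <- !hadd_assoc, (hadd_comm _ b (hopp c)). reflexivity. Qed.
Lemma id3 (y r : V) : hsub (hsub y r) y = hopp r.
Proof. unfold hsub. rewrite <- hadd_assoc, hadd_comm, <- hadd_assoc, addNl, hadd_zero. reflexivity. Qed.

Lemma P00 : P hzero hzero.
Proof.
  destruct (H1 hzero) as [x Hx]. pose proof (H3 0 _ _ Hx) as E.
  rewrite !(scal_C0 V) in E; auto.
Qed.
Lemma Psub y1 x1 y2 x2 : P y1 x1 -> P y2 x2 -> P (hsub y1 y2) (hsub x1 x2).
Proof.
  intros A B. unfold hsub. rewrite <- !scal_m1. apply H2; auto.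
Qed.

Lemma approx : exists K, 0 <= K /\ forall y eps, 0 < eps -> exists y' x',
  P y' x' /\ hnorm x' <= K * hnorm y /\ hnorm (hsub y y') < eps.
Proof.
  destruct (baire V (fun n y => exists x, P y x /\ hnorm x <= INR n)) as [n [c [r [Hr Hd]]]].
  { intro y. destruct (H1 y) as [x Hx]. destruct (INR_unbounded (hnorm x)) as [n Hn].
    exists n, x; split; auto; lra. }
  exists (4 * INR n / r). split. { pose proof (pos_INR n). apply Rmult_le_pos; [lra|]. apply Rlt_le, Rinv_0_lt_compat; auto. }
  intros y eps He.
  destruct (Req_dec (hnorm y) 0) as [Z|Z].
  { apply hnorm_eq0 in Z. subst. exists hzero, hzero. split; [apply P00|]. rewrite hnorm0.
    split; [lra|]. rewrite sub0r, hnorm0; auto. }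
  pose proof (hnorm_ge0 V y).
  set (ny := hnorm y) in *. set (t := r / (2 * ny)).
  assert (Ht : 0 < t) by (unfold t; apply Rdiv_lt_0_compat; lra).
  set (z := hscal (t,0) y).
  assert (Hz : hnorm z = r / 2) by (unfold z; rewrite hnorm_scalR, Rabs_pos_eq by lra; unfold t, ny in *; field; exact Z).
  destruct (Hd (hadd c z) ltac:(rewrite add_sub_l; lra) (t * eps / 2) ltac:(nra)) as [e1 [[x1 [P1 N1]] D1]].
  destruct (Hd c ltac:(unfold hsub; rewrite hadd_opp, hnorm0; auto) (t * eps / 2) ltac:(nra)) as [e2 [[x2 [P2 N2]] D2]].
  exists (hscal (/t, 0) (hsub e1 e2)), (hscal (/t, 0) (hsub x1 x2)).
  split; [apply H3, Psub; auto|]. split.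
  - rewrite hnorm_scalR, Rabs_pos_eq by (apply Rlt_le, Rinv_0_lt_compat; auto).
    pose proof (hnorm_sub_le V x1 x2).
    replace (4 * INR n / r * ny) with (/t * (2 * INR n)) by (unfold t; field; lra).
    apply Rmult_le_compat_l; [apply Rlt_le, Rinv_0_lt_compat; auto| lra].
  - rewrite <- (scal_inv V t y) by lra. fold z. rewrite <- scal_sub, hnorm_scalR, Rabs_pos_eq
      by (apply Rlt_le, Rinv_0_lt_compat; auto).
    rewrite (id1 z c e1 e2). pose proof (hnorm_sub_le V (hsub (hadd c z) e1) (hsub c e2)).
    assert (hnorm (hsub (hsub (hadd c z) e1) (hsub c e2)) < t * eps) by lra.
    apply Rmult_lt_compat_l with (r := /t) in H6; [|apply Rinv_0_lt_compat; auto].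
    replace (/t * (t * eps)) with eps in H6 by (field; lra). auto.
Qed.

Lemma closed_graph : exists M, 0 <= M /\ forall y x, P y x -> hnorm x <= M * hnorm y.
Proof.
  destruct approx as [K [HK Ha]]. exists (2 * K). split; [lra|].
  intros y x Hyx.
  destruct (Req_dec (hnorm y) 0) as [Z|Z].
  { rewrite Z. apply hnorm_eq0 in Z. subst. rewrite (H4 x Hyx), hnorm0. lra. }
  pose proof (hnorm_ge0 V y). set (ny := hnorm y) in *.
  assert (Hg : forall k w, exists p : V * V, P (fst p) (snd p) /\ hnorm (snd p) <= K * hnorm w /\
     hnorm (hsub w (fst p)) < ny * (/2)^(S k)).
  { intros k w. destruct (Ha w (ny * (/2)^(S k))) as [y' [x' [A [B C]]]].
    apply Rmult_lt_0_compat; [lra| apply pow_lt; lra].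
    exists (y', x'); simpl; auto. }
  set (g := fun k w => proj1_sig (constructive_indefinite_description _ (Hg k w))).
  assert (Hgs : forall k w, P (fst (g k w)) (snd (g k w)) /\ hnorm (snd (g k w)) <= K * hnorm w /\
     hnorm (hsub w (fst (g k w))) < ny * (/2)^(S k)).
  { intros k w. unfold g. destruct (constructive_indefinite_description _ _) as [p Hp]. simpl; auto. }
  set (rm := rem_seq g y).
  set (xs := fun k => snd (g k (rm k))).
  set (X := psum xs).
  assert (R1 : forall k, hnorm (rm k) <= ny * (/2)^k).
  { induction k. simpl; unfold ny; lra.
    destruct (Hgs k (rm k)) as [_ [_ C]]. change (rm (S k)) with (hsub (rm k) (fst (g k (rm k)))). lra. }
  assert (R2 : forall k, hnorm (xs k) <= K * ny * (/2)^k).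
  { intro k. destruct (Hgs k (rm k)) as [_ [B _]]. unfold xs. rewrite Rmult_assoc.
    eapply Rle_trans; [apply B|]. apply Rmult_le_compat_l; auto. }
  assert (R3 : forall m, P (hsub y (rm m)) (X m)).
  { induction m. simpl. unfold hsub; rewrite hadd_opp. apply P00.
    change (rm (S m)) with (hsub (rm m) (fst (g m (rm m)))). rewrite sub_sub_r.
    simpl. apply H2; auto. apply Hgs. }
  assert (R4 : forall j n, hnorm (hsub (X (j + n)%nat) (X n)) <= 2 * K * ny * ((/2)^n - (/2)^(j+n))).
  { induction j; intro n.
    - simpl. unfold hsub; rewrite hadd_opp, hnorm0. lra.
    - change (X (S j + n)%nat) with (hadd (X (j + n)%nat) (xs (j+n)%nat)). rewrite id2.
      eapply Rle_trans; [apply hnorm_tri|]. specialize (IHj n). specialize (R2 (j+n)%nat).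
      replace ((/2)^(S j + n)) with (/2 * (/2)^(j+n)) by (simpl; ring). lra. }
  assert (XB : forall m, hnorm (X m) <= 2 * K * ny).
  { intro m. specialize (R4 m 0%nat). rewrite Nat.add_0_r in R4. simpl in R4.
    rewrite sub0r in R4. pose proof (pow_le (/2) m ltac:(lra)).
    assert (0 <= K * ny * (/2)^m) by (apply Rmult_le_pos; [apply Rmult_le_pos|]; auto). lra. }
  assert (Cau : forall eps, 0 < eps -> exists N, forall m n, (N <= m)%nat -> (N <= n)%nat ->
      hnorm (hsub (X m) (X n)) < eps).
  { intros eps He. destruct (half_pow_small (eps / (4 * K * ny + 1))) as [N HN].
    { apply Rdiv_lt_0_compat; nra. }
    exists N. intros m n Hm Hn.
    pose proof (R4 (m - N)%nat N) as C1. pose proof (R4 (n - N)%nat N) as C2.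
    replace (m - N + N)%nat with m in C1 by lia. replace (n - N + N)%nat with n in C2 by lia.
    pose proof (hnorm_subtri V (X m) (X N) (X n)). rewrite (hnorm_sub_sym V (X N) (X n)) in H0.
    pose proof (pow_le (/2) m ltac:(lra)). pose proof (pow_le (/2) n ltac:(lra)).
    assert (Hq : (/2)^N * (4 * K * ny + 1) < eps).
    { apply Rmult_lt_compat_r with (r := 4 * K * ny + 1) in HN; [|nra].
      replace (eps / (4 * K * ny + 1) * (4 * K * ny + 1)) with eps in HN by (field; nra). auto. }
    pose proof (pow_le (/2) N ltac:(lra)).
    assert (0 <= K * ny * (/2)^m) by (apply Rmult_le_pos; [apply Rmult_le_pos|]; auto).
    assert (0 <= K * ny * (/2)^n) by (apply Rmult_le_pos; [apply Rmult_le_pos|]; auto). lra. }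
  destruct (hcomplete V X Cau) as [xst Hx].
  assert (Py : P y xst).
  { apply (H5 (fun m => hsub y (rm m)) X); auto.
    - intros eps He. destruct (half_pow_small (eps / (ny + 1))) as [N HN].
      { apply Rdiv_lt_0_compat; lra. }
      exists N. intros m Hm. rewrite id3, hnorm_opp.
      pose proof (R1 m) as Q1. pose proof (half_pow_mono (m - N) N) as Q2. replace (m - N + N)%nat with m in Q2 by lia.
      apply Rmult_lt_compat_r with (r := ny + 1) in HN; [|lra].
      replace (eps / (ny + 1) * (ny + 1)) with eps in HN by (field; lra).
      assert (ny * (/2)^m <= ny * (/2)^N) by (apply Rmult_le_compat_l; auto).
      pose proof (pow_le (/2) N ltac:(lra)). nra. }
  assert (x = xst).
  { apply sub_eq0, H4. rewrite <- (hadd_opp _ y). apply Psub; auto. }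
  subst xst. apply le_eps. intros d Hd. destruct (Hx d Hd) as [N HN]. specialize (HN N (le_n N)).
  change (hnorm (hsub (X N) x) < d) in HN. rewrite hnorm_sub_sym in HN.
  pose proof (hnorm_le_sub V x (X N)). specialize (XB N). lra.
Qed.
End CG.

Section Lin.
Variables V W : CHilbert.
Variable D : V -> Prop.
Variable L : V -> W.
Hypothesis HL : linear_op V W D L.

Lemma lin_add x y : D x -> D y -> D (hadd x y) /\ L (hadd x y) = hadd (L x) (L y).
Proof. destruct HL as [_ [A _]]; auto. Qed.
Lemma lin_scal s x : D x -> D (hscal s x) /\ L (hscal s x) = hscal s (L x).
Proof. destruct HL as [_ [_ A]]; auto. Qed.
Lemma lin_sub x y : D x -> D y -> D (hsub x y) /\ L (hsub x y) = hsub (L x) (L y).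
Proof.
  intros Dx Dy. unfold hsub. rewrite <- !scal_m1.
  destruct (lin_scal (-1,0) y Dy) as [D1 E1]. destruct (lin_add x _ Dx D1) as [D2 E2].
  split; auto. rewrite E2, E1; auto.
Qed.
End Lin.

Section Shift.
Variable V : CHilbert.
Variable D : V -> Prop.
Variable B : V -> V.
Hypothesis HL : linear_op V V D B.
Variable lam : Cplx.

Lemma shift_add x y : D x -> D y -> shift B lam (hadd x y) = hadd (shift B lam x) (shift B lam y).
Proof.
  intros Dx Dy. unfold shift. rewrite (proj2 (lin_add _ _ _ _ HL x y Dx Dy)), hscal_addv.
  apply sub_add_distr.
Qed.
Lemma shift_scal s x : D x -> shift B lam (hscal s x) = hscal s (shift B lam x).
Proof.
  intros Dx. unfold shift. rewrite (proj2 (lin_scal _ _ _ _ HL s x Dx)), scal_sub, scal_comm; auto.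
Qed.
Lemma shift_sub x y : D x -> D y -> shift B lam (hsub x y) = hsub (shift B lam x) (shift B lam y).
Proof.
  intros Dx Dy. unfold hsub at 1. rewrite <- scal_m1.
  rewrite shift_add, shift_scal, scal_m1; auto.
  apply (lin_scal _ _ _ _ HL); auto.
Qed.
End Shift.

Theorem corollary3p13 (H K : CHilbert) (DA : H -> Prop) (A : H -> H)
  (DB : K -> Prop) (B : K -> K) (T : H -> K) :
  closed_densely_defined H H DA A ->
  closed_densely_defined K K DB B ->
  quasi_similar_via H K T DA A DB B ->
  (forall y, DB y -> range T y) ->
  (forall y, DB y -> range T (B y)) ->
  forall lam : Cplx,
    in_resolvent DA A lam -> ~ in_point_spectrum DB B lam ->
    in_resolvent DB B lam \/ in_continuous_spectrum DB B lam.
Proof.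
  intros _ [HBl [HBc _]] [[[HTl _] HTi] [_ HTd]] _ _ lam [_ [HAs _]] Hnp.
  set (P := fun y x => DB x /\ shift B lam x = y).
  assert (H4 : forall x, P hzero x -> x = hzero).
  { intros x [Dx Ex]. apply NNPP; intro Hx. apply Hnp. exists x. split; auto. split; auto.
    apply sub_eq0; auto. }
  assert (Inj : forall x y, DB x -> DB y -> shift B lam x = shift B lam y -> x = y).
  { intros x y Dx Dy E. apply sub_eq0, H4. split. apply (lin_sub _ _ _ _ HBl); auto.
    rewrite (shift_sub _ _ _ HBl); auto. rewrite E. apply hadd_opp. }
  assert (Dns : dense (fun y => exists x, DB x /\ shift B lam x = y)).
  { intros y eps He. destruct (HTd y eps He) as [y1 [[z Ez] Hy1]]. subst y1.
    destruct (HAs z) as [w [Dw Ew]]. exists (T z). split; auto.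
    exists (T w). destruct (HTi w Dw) as [DTw BTw]. split; auto.
    subst z. unfold shift. rewrite BTw.
    rewrite (proj2 (lin_sub _ _ _ _ HTl (A w) (hscal lam w) I I)).
    rewrite (proj2 (lin_scal _ _ _ _ HTl lam w I)). auto. }
  destruct (classic (forall y, exists x, DB x /\ shift B lam x = y)) as [Sur|NSur].
  2: { right. split; auto. }
  left. split; auto. split; auto.
  assert (CG : exists M, 0 <= M /\ forall y x, P y x -> hnorm x <= M * hnorm y).
  { apply closed_graph; auto.
    - intros y1 x1 y2 x2 [D1 E1] [D2 E2]. split. apply (lin_add _ _ _ _ HBl); auto.
      rewrite (shift_add _ _ _ HBl); auto. subst; auto.
    - intros t y x [D1 E1]. split. apply (lin_scal _ _ _ _ HBl); auto.
      rewrite (shift_scal _ _ _ HBl); auto. subst; auto.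
    - intros u v y x Huv Hu Hv.
      assert (Bc : converges (fun n => B (v n)) (hadd y (hscal lam x))).
      { set (Lm := sqrt (fst lam * fst lam + snd lam * snd lam)).
        assert (HLm : 0 <= Lm) by apply sqrt_pos.
        intros eps He. destruct (Hu (eps/2) ltac:(lra)) as [N1 HN1].
        destruct (Hv (eps / (2 * (Lm + 1)))) as [N2 HN2].
        { apply Rdiv_lt_0_compat; lra. }
        exists (N1 + N2)%nat. intros n Hn.
        specialize (HN1 n ltac:(lia)). specialize (HN2 n ltac:(lia)).
        destruct (Huv n) as [Dn En].
        replace (B (v n)) with (hadd (u n) (hscal lam (v n))).
        2: { rewrite <- En. unfold shift. apply sub_add_cancel. }
        rewrite sub_add_distr. eapply Rle_lt_trans; [apply hnorm_tri|].
        rewrite <- scal_sub, hnorm_scal. fold Lm.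
        assert (Lm * hnorm (hsub (v n) x) <= (Lm + 1) * (eps / (2 * (Lm + 1)))).
        { apply Rmult_le_compat; auto. apply hnorm_ge0. lra. lra. }
        replace ((Lm + 1) * (eps / (2 * (Lm + 1)))) with (eps / 2) in H0 by (field; lra).
        lra. }
      destruct (HBc v x _ (fun n => proj1 (Huv n)) Hv Bc) as [Dx Bx].
      split; auto. unfold shift. rewrite Bx, hadd_comm. apply add_sub_l. }
  destruct CG as [M [_ HM]]. exists M. intros x Dx. apply HM. split; auto.
Qed.
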